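(* Let $n$ and $s$ be positive integers and let $L=\{\ell_1,\ldots,\ell_s\}$ be a set of $s$ non-negative integers. Let $\mathcal{F}=\{F_1,\ldots,F_m\}$ be a family of subsets of $[n]=\{1,\ldots,n\}$ such that $|F_i\cap F_j|\in L$ for all $1\le i,j\le m$ with $i\neq j$, and suppose $\mathcal{F}$ is ordered, i.e. there exists an index $1\le r\le m$ such that $n\in F_i$ for each $1\le i\le r$, $n\notin F_i$ for each $i>r$, and $|F_i|\le |F_j|$ for all $1\le i<j\le m$. Then $$m\le \sum_{i=0}^{s}\binom{n-1}{i}.$$
   Context: $[n]$ denotes $\{1,2,\ldots,n\}$. *)

(* Defs.v *)
(* Ground set [n] = {1,...,n} is represented inside 'I_n.+1
   as the ordinals with value in 1..n; the element n is ord_max. *)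
From mathcomp Require Import all_boot all_order.
Set Implicit Arguments. Unset Strict Implicit. Unset Printing Implicit Defensive.

(* Main.v *)
Require Import Defs.
From mathcomp Require Import all_boot all_order.
From mathcomp Require Import all_algebra zify.
Import GRing.Theory Num.Theory.

Lemma card_le_sets (T : finType) (B : {set T}) k :
  #|[set S : {set T} | (S \subset B) && (#|S| <= k)]| = \sum_(0 <= i < k.+1) 'C(#|B|, i).
Proof.
elim: k => [|k IH].
  rewrite big_nat1 -cards_draws; apply: eq_card => S; rewrite !inE leqn0 //.
rewrite (@big_nat_recr _ _ _ k.+1 0) //= -IH -cards_draws
  -[LHS](cardsID [set S : {set T} | (S \subset B) && (#|S| <= k)]).
congr (_ + _); apply: eq_card => S; rewrite !inE;
  case: (S \subset B) => //=; lia.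
Qed.

Section Gen.
Local Set Implicit Arguments.
Variable n : nat.
Definition G : {set 'I_n.+1} := ~: [set ord0; ord_max].

Inductive gen (k : nat) : ({set 'I_n.+1} -> rat) -> Prop :=
| gen_mono (S : {set 'I_n.+1}) : S \subset G -> #|S| <= k -> gen k (fun Y : {set 'I_n.+1} => (S \subset Y)%:R%R)
| gen0 : gen k (fun _ : {set 'I_n.+1} => 0%R)
| genD f g : gen k f -> gen k g -> gen k (fun Y : {set 'I_n.+1} => f Y + g Y)%R
| genZ c f : gen k f -> gen k (fun Y : {set 'I_n.+1} => c * f Y)%R
| genE f g : gen k f -> (forall Y, f Y = g Y) -> gen k g.

Lemma gen_le k k' f : k <= k' -> gen k f -> gen k' f.
Proof.
move=> kk; elim=> {f}.
- move=> S SG Sk; apply: gen_mono => //; exact: leq_trans kk.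
- exact: gen0.
- by move=> f g _ Hf _ Hg; apply: genD.
- by move=> c f _ Hf; apply: genZ.
- by move=> f g _ Hf E; apply: genE E.
Qed.

Lemma gen_sum k (I : Type) (r : seq I) (P : pred I) (h : I -> {set 'I_n.+1} -> rat) :
  (forall i, P i -> gen k (h i)) -> gen k (fun Y : {set 'I_n.+1} => \sum_(i <- r | P i) h i Y)%R.
Proof.
move=> Hh; elim: r => [|x r IH].
  by apply: genE (gen0 k) _ => Y; rewrite big_nil.
case Px: (P x).
  by apply: genE (genD (Hh x Px) IH) _ => Y; rewrite big_cons Px.
by apply: genE IH _ => Y; rewrite big_cons Px.
Qed.

Lemma gen_mul k f (A : {set 'I_n.+1}) (c : rat) : A \subset G -> gen k f ->
  gen k.+1 (fun Y : {set 'I_n.+1} => (#|A :&: Y|%:R + c) * f Y)%R.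
Proof.
move=> AG; elim=> {f}.
- move=> S SG Sk.
  have H1 : gen k.+1 (fun Y : {set 'I_n.+1} => \sum_(a <- index_enum 'I_n.+1 | a \in A) ((a |: S) \subset Y)%:R)%R.
    apply: gen_sum => a aA; apply: gen_mono.
      by rewrite subUset sub1set (subsetP AG) // SG.
    by rewrite cardsU1; apply: (leq_add (leq_b1 _) Sk).
  have H2 := genZ c (gen_le k.+1 (leqnSn k) (gen_mono k SG Sk)).
  apply: genE (genD H1 H2) _ => Y.
  rewrite mulrDl; congr (_ + _)%R; symmetry.
  transitivity (\sum_(a in A) ((a \in Y) && (S \subset Y))%:R : rat)%R; last first.
    by apply: eq_bigr => a _; rewrite subUset sub1set.
  case: (S \subset Y); last first.
    by rewrite mulr0 big1 // => a _; rewrite andbF.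
  rewrite mulr1 -sum1_card natr_sum big_mkcond [RHS]big_mkcond /=.
  by apply: eq_bigr => a _; rewrite !inE; case: (a \in A); case: (a \in Y).
- by apply: genE (gen0 _) _ => Y; rewrite mulr0.
- move=> f g _ Hf _ Hg; apply: genE (genD Hf Hg) _ => Y; by rewrite mulrDr.
- move=> c' f _ Hf; apply: genE (genZ c' Hf) _ => Y.
  by rewrite mulrCA.
- move=> f g _ Hf E; apply: genE Hf _ => Y; by rewrite E.
Qed.

Lemma gen_prod (A : {set 'I_n.+1}) (e : nat) (P : pred nat) (L : seq nat) : A \subset G ->
  gen (count P L) (fun Y : {set 'I_n.+1} => \prod_(l <- L | P l) ((#|A :&: Y| + e)%:R - l%:R : rat))%R.
Proof.
move=> AG; elim: L => [|l L IH] /=.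
  apply: genE (gen_mono 0 (sub0set G) _) _ => [|Y]; first by rewrite cards0.
  by rewrite big_nil sub0set.
case Pl: (P l) => /=.
  apply: genE (gen_mul (e%:R - l%:R)%R AG IH) _ => Y.
  by rewrite big_cons Pl natrD addrA.
by apply: genE IH _ => Y; rewrite big_cons Pl.
Qed.

End Gen.

Theorem theorem3 (n s m : nat) (L : seq nat) (F : nat -> {set 'I_n.+1}) :
  0 < n -> 0 < s -> uniq L -> size L = s ->
  (* each F_i is a subset of [n] = {1,...,n} *)
  (forall i, 1 <= i <= m -> F i \subset [set x : 'I_n.+1 | 0 < x]) ->
  (* F is a family (set) of m distinct subsets *)
  (forall i j, 1 <= i <= m -> 1 <= j <= m -> i != j -> F i != F j) ->
  (* L-intersecting *)
  (forall i j, 1 <= i <= m -> 1 <= j <= m -> i != j -> #|F i :&: F j| \in L) ->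
  (* ordered *)
  (exists r, [/\ 1 <= r <= m,
     (forall i, 1 <= i <= r -> (ord_max : 'I_n.+1) \in F i) &
     (forall i, r < i <= m -> (ord_max : 'I_n.+1) \notin F i)]) ->
  (forall i j, 1 <= i -> i < j -> j <= m -> #|F i| <= #|F j|) ->
  m <= \sum_(0 <= i < s.+1) 'C(n - 1, i).
Proof.
move=> n0 s0 uL sL Hsub Hdist HL [r [/andP[r1 rm] Hin Hout]] Hsz.
pose U j := F j :\ (ord_max : 'I_n.+1).
pose g (i : nat) (Y : {set 'I_n.+1}) := (\prod_(l <- L | (l < #|F i|)%N)
   ((#|U i :&: Y| + ((ord_max : 'I_n.+1) \in F i))%:R - l%:R : rat))%R.
have UG : forall i, 1 <= i <= m -> U i \subset G n.
  move=> i im; apply/subsetP => x; rewrite !inE => /andP[xm xF].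
  have := subsetP (Hsub i im) x xF; rewrite inE => x0.
  apply/negP => /orP[/eqP E|/eqP E]; first by rewrite E in x0.
  by rewrite E eqxx in xm.
have gg : forall i, 1 <= i <= m -> gen s (g i).
  move=> i im; apply: (gen_le s _ (gen_prod ((ord_max : 'I_n.+1) \in F i)
     (fun l => l < #|F i|) L (UG i im))).
  by rewrite -sL count_size.
have card_split : forall i j, #|F i :&: F j| =
    #|U i :&: U j| + (((ord_max : 'I_n.+1) \in F i) && ((ord_max : 'I_n.+1) \in F j)).
  move=> i j; rewrite (cardsD1 ord_max (F i :&: F j)) inE addnC; congr (_ + _).
  apply: eq_card => x; rewrite !inE.
  by case: (x == ord_max); case: (x \in F i).
have zero : forall i j, 1 <= j -> j < i -> i <= m -> g i (U j) = 0%R.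
  move=> i j j1 ji im.
  have jm : j <= m by exact: ltnW (leq_trans ji im).
  have i1 : 1 <= i by exact: leq_trans j1 (ltnW ji).
  have ij : i != j by rewrite gtn_eqF.
  have hm : ((ord_max : 'I_n.+1) \in F i) && ((ord_max : 'I_n.+1) \in F j)
         = ((ord_max : 'I_n.+1) \in F i).
    case Hi: ((ord_max : 'I_n.+1) \in F i) => //=.
    have ir : i <= r.
      rewrite leqNgt; apply/negP => ri.
      by move: (Hout i); rewrite ri im Hi => /(_ isT).
    by apply: Hin; rewrite j1 (leq_trans (ltnW ji) ir).
  have lt : #|F i :&: F j| < #|F i|.
    rewrite ltn_neqAle subset_leq_card ?subsetIl // andbT; apply/eqP => E.
    have sub : F i \subset F j.
      have : F i :&: F j == F i by rewrite eqEcard subsetIl E leqnn.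
      by move/eqP/setIidPl.
    have := Hdist i j _ _ ij; rewrite i1 im j1 jm => /(_ isT isT).
    by rewrite eqEcard sub (Hsz j i j1 ji im).
  apply/eqP; rewrite prodf_seq_eq0; apply/hasP; exists #|F i :&: F j|.
    by apply: HL; rewrite ?i1 ?im ?j1 ?jm.
  by rewrite lt /= subr_eq0 eqr_nat -hm -card_split.
have nonzero : forall i, g i (U i) != 0%R.
  move=> i; rewrite prodf_seq_neq0; apply/allP => l _; apply/implyP => lt.
  rewrite subr_eq0 eqr_nat setIid.
  have -> : #|U i| + ((ord_max : 'I_n.+1) \in F i) = #|F i|
    by rewrite (cardsD1 ord_max (F i)) addnC.
  by rewrite gtn_eqF.
pose D := [set S : {set 'I_n.+1} | (S \subset G n) && (#|S| <= s)].
pose vec (f : {set 'I_n.+1} -> rat) : 'rV[rat]_m := (\row_(j < m) f (U j.+1))%R.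
pose W : 'M[rat]_(#|D|, m) :=
  (\matrix_(k < #|D|) vec (fun Y => ((enum_val k \subset Y)%:R)%R))%R.
have gsub : forall f, gen s f -> (vec f <= W)%MS.
  move=> f; elim.
  - move=> S SG Ss; have SD : S \in D by rewrite inE SG Ss.
    rewrite (_ : vec _ = row (enum_rank_in SD S) W) ?row_sub //.
    by apply/rowP => j; rewrite !mxE (enum_rankK_in SD SD).
  - by rewrite (_ : vec _ = 0%R) ?sub0mx //; apply/rowP => j; rewrite !mxE.
  - move=> f1 g1 _ H1 _ H2; rewrite (_ : vec _ = vec f1 + vec g1)%R ?addmx_sub //.
    by apply/rowP => j; rewrite !mxE.
  - move=> c f1 _ H1; rewrite (_ : vec _ = c *: vec f1)%R ?scalemx_sub //.
    by apply/rowP => j; rewrite !mxE.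
  - move=> f1 g1 _ H1 E; rewrite (_ : vec g1 = vec f1) //.
    by apply/rowP => j; rewrite !mxE E.
pose Mt : 'M[rat]_m := (\matrix_(i < m, j < m) g i.+1 (U j.+1))%R.
have MW : (Mt <= W)%MS.
  apply/row_subP => i; rewrite (_ : row i Mt = vec (g i.+1)).
    by apply: gsub; apply: gg; rewrite ltn_ord.
  by apply/rowP => j; rewrite !mxE.
have rk : \rank Mt = m.
  apply: mxrank_unit; rewrite unitmxE unitfE -det_tr det_trig.
    by apply/prodf_neq0 => i _; rewrite !mxE.
  apply/forallP => i; apply/forallP => j; apply/implyP => ij; rewrite !mxE.
  by rewrite zero ?ltn_ord.
have := mxrankS MW; rewrite rk => h.
apply: (leq_trans h); apply: (leq_trans (rank_leq_row W)).
have cG : #|G n| = n - 1.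
  have := cardsC [set (ord0 : 'I_n.+1); ord_max].
  rewrite cards2 card_ord.
  have -> : ((ord0 : 'I_n.+1) != ord_max).
    by rewrite -val_eqE /= eq_sym -lt0n.
  rewrite /G /= => hh; apply/eqP; rewrite -(eqn_add2l 2) hh; apply/eqP; lia.
by rewrite card_le_sets cG.
Qed.
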